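(* Let $M\geq 1$ and let $r$ be a DSIC mechanism in the bilateral cooperation model described in the context, with competitive ratio $\alpha$. For $d\in\{1,\dots,M\}$ let $B_*^d$ be the set of submodular vectors $b\in\mathbb{R}^M$ with $b_1\geq\cdots\geq b_d>0\geq b_{d+1}\geq\cdots\geq b_M$. Let $s^*\in\mathbb{R}^M$ be given by $s^*_i=i$ for all $i$. Then for every $d\in\{1,\dots,M\}$ and every $b\in B_*^d$: $$\sum_{i=1}^d r_i(b,s^* )\, b_i\ \geq\ \alpha\cdot\sum_{i=1}^d \frac{b_i}{i}.$$
   Context: Bilateral cooperation model: there are two agents, a buyer and a seller, and options $0,1,\dots,M$. A buyer utility vector is $b=(b_1,\dots,b_M)\in\mathbb{R}^M$ and a seller utility vector is $s=(s_1,\dots,s_M)\in\mathbb{R}^M$; by convention $b_0=s_0=0$. A vector $v=(v_1,\dots,v_M)$ (with $v_0=0$) is submodular if $v_{i+1}-v_i\leq v_i-v_{i-1}$ for every $i\in\{1,\dots,M-1\}$. Define $\mathrm{Feasible}(b,s)=\{i\in\{0,\dots,M\}: b_i\geq 0 \text{ and } s_i\geq 0\}$ and $OPT(b,s)=\max_{i\in \mathrm{Feasible}(b,s)}(b_i+s_i)$. A mechanism is a function $r$ mapping each pair of reported vectors $(b',s')$ to a probability vector $(r_0(b',s'),\dots,r_M(b',s'))$. The mechanism $r$ is DSIC if for all $b,b',s,s'$: $\sum_{i=1}^M r_i(b,s')\,b_i\geq \sum_{i=1}^M r_i(b',s')\,b_i$ and $\sum_{i=1}^M r_i(b',s)\,s_i\geq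 \sum_{i=1}^M r_i(b',s')\,s_i$. The gain at true vectors $(b,s)$ is $G_r(b,s)=\sum_{i=1}^M r_i(b,s)(b_i+s_i)$, and the competitive ratio is $C_r=\min_{b,s} G_r(b,s)/OPT(b,s)$; ''competitive ratio $\alpha$'' means $C_r=\alpha$. *)

(* Defs.v *)
From mathcomp Require Import all_boot all_order all_algebra.
Set Implicit Arguments. Unset Strict Implicit. Unset Printing Implicit Defensive.
Import Order.TTheory GRing.Theory Num.Theory.
Local Open Scope ring_scope.

(* A utility vector (v_1,...,v_M): coordinate i : 'I_M stores v_(i+1). *)
Definition vec (R : realFieldType) (M : nat) := {ffun 'I_M -> R}.

(* 1-based access with the convention v_0 = 0 (and 0 beyond M). *)
Definition vn (R : realFieldType) (M : nat) (v : vec R M) (n : nat) : R :=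
  match n with
  | 0 => 0
  | k.+1 => if @insub _ (fun x => (x < M)%N) 'I_M k is Some i then v i else 0
  end.

Definition mechanism (R : realFieldType) (M : nat) :=
  vec R M -> vec R M -> 'I_M.+1 -> R.

Definition rn (R : realFieldType) (M : nat) (r : mechanism R M)
  (b s : vec R M) (n : nat) : R := r b s (inord n).

Definition is_prob_mechanism (R : realFieldType) (M : nat) (r : mechanism R M) :=
  forall b s, (forall j, 0 <= r b s j) /\ \sum_(j < M.+1) r b s j = 1.

Definition submodular (R : realFieldType) (M : nat) (v : vec R M) :=
  forall i : nat, (1 <= i)%N -> (i <= M.-1)%N ->
    vn v i.+1 - vn v i <= vn v i - vn v i.-1.

Definition DSIC (R : realFieldType) (M : nat) (r : mechanism R M) :=
  forall b b' s s' : vec R M,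
    \sum_(1 <= i < M.+1) rn r b s' i * vn b i
      >= \sum_(1 <= i < M.+1) rn r b' s' i * vn b i
  /\ \sum_(1 <= i < M.+1) rn r b' s i * vn s i
      >= \sum_(1 <= i < M.+1) rn r b' s' i * vn s i.

(* OPT(b,s) = max over feasible options i in {0..M} of b_i + s_i
   (option 0 is always feasible with value 0). *)
Definition OPT (R : realFieldType) (M : nat) (b s : vec R M) : R :=
  \big[Num.max/0]_(0 <= i < M.+1 | (0 <= vn b i) && (0 <= vn s i))
     (vn b i + vn s i).

Definition gain (R : realFieldType) (M : nat) (r : mechanism R M) (b s : vec R M) : R :=
  \sum_(1 <= i < M.+1) rn r b s i * (vn b i + vn s i).

Definition competitive_ratio (R : realFieldType) (M : nat) (r : mechanism R M) (alpha : R) :=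
  (forall b s : vec R M, 0 < OPT b s -> alpha <= gain r b s / OPT b s) /\
  (forall beta : R,
     (forall b s : vec R M, 0 < OPT b s -> beta <= gain r b s / OPT b s) ->
     beta <= alpha).

Definition Bstar (R : realFieldType) (M : nat) (d : nat) (b : vec R M) :=
  [/\ submodular b,
      (forall i : nat, (1 <= i)%N -> (i < d)%N -> vn b i.+1 <= vn b i),
      0 < vn b d,
      (d < M)%N -> vn b d.+1 <= 0 &
      (forall i : nat, (d < i)%N -> (i < M)%N -> vn b i.+1 <= vn b i)].

Definition sstar (R : realFieldType) (M : nat) : vec R M :=
  [ffun i : 'I_M => (i.+1)%:R].

(* Main.v *)
Require Import Defs.
From mathcomp Require Import all_boot all_order all_algebra.
From mathcomp Require Import ring lra zify.
Set Implicit Arguments. Unset Strict Implicit. Unset Printing Implicit Defensive.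
Import Order.TTheory GRing.Theory Num.Theory.
Local Open Scope ring_scope.

Definition mk (R : realFieldType) (M : nat) (f : nat -> R) : vec R M :=
  [ffun i : 'I_M => f i.+1].
Arguments mk {R} M f.

Lemma vn_mk (R : realFieldType) (M : nat) (f : nat -> R) n :
  (1 <= n <= M)%N -> vn (mk M f) n = f n.
Proof.
case: n => [//|k] /andP[_ hk] /=.
case: insubP => [i _ hi|]; first by rewrite ffunE hi.
by rewrite /= hk.
Qed.

Lemma vn_sstar (R : realFieldType) (M : nat) n :
  (1 <= n <= M)%N -> vn (sstar R M) n = n%:R.
Proof. exact: (@vn_mk R M (fun n => n%:R)). Qed.

Definition P (R : realFieldType) (M : nat) (r : mechanism R M) (x s : vec R M)
  (f : nat -> R) := \sum_(1 <= i < M.+1) rn r x s i * f i.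

Lemma P_ext (R : realFieldType) (M : nat) (r : mechanism R M) x s f g :
  (forall i, (1 <= i <= M)%N -> f i = g i) -> P r x s f = P r x s g.
Proof.
move=> h; apply: eq_big_nat => i /andP[h1 h2]; rewrite h //.
by rewrite h1 -ltnS h2.
Qed.

Lemma P_lin (R : realFieldType) (M : nat) (r : mechanism R M) x s f g c :
  P r x s (fun n => f n + c * g n) = P r x s f + c * P r x s g.
Proof.
rewrite /P mulr_sumr -big_split /=; apply: eq_bigr => i _; ring.
Qed.

Lemma rn_ge0 (R : realFieldType) (M : nat) (r : mechanism R M) x s i :
  is_prob_mechanism r -> 0 <= rn r x s i.
Proof. by move=> h; rewrite /rn; case: (h x s) => h1 _; apply: h1. Qed.

Lemma P_le (R : realFieldType) (M : nat) (r : mechanism R M) x s f g :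
  is_prob_mechanism r ->
  (forall i, (1 <= i <= M)%N -> f i <= g i) -> P r x s f <= P r x s g.
Proof.
move=> hr h; apply: ler_sum_nat => i /andP[h1 h2].
apply: ler_wpM2l; first exact: rn_ge0.
by apply: h; rewrite h1 -ltnS h2.
Qed.

Lemma sum_rn_le1 (R : realFieldType) (M : nat) (r : mechanism R M) x s :
  is_prob_mechanism r -> \sum_(1 <= i < M.+1) rn r x s i <= 1.
Proof.
move=> hr; case: (hr x s) => h0 h1.
have e : \sum_(0 <= i < M.+1) rn r x s i = 1.
  rewrite big_mkord -h1; apply: eq_bigr => i _; by rewrite /rn inord_val.
move: e; rewrite big_ltn // => e.
have := rn_ge0 x s 0 hr; lra.
Qed.

Lemma OPT_ge (R : realFieldType) (M : nat) (b s : vec R M) k :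
  (k <= M)%N -> 0 <= vn b k -> 0 <= vn s k -> vn b k + vn s k <= OPT b s.
Proof.
move=> hk hb hs; rewrite /OPT.
have : k \in index_iota 0 M.+1 by rewrite mem_iota /= subn0 add0n ltnS hk.
elim: (index_iota 0 M.+1) => // a l IH; rewrite inE big_cons => /orP[/eqP<-|kl].
  by rewrite hb hs /= le_max lexx.
case: ifP => _; last exact: IH.
by rewrite le_max IH ?orbT.
Qed.

Lemma down_mono (R : realFieldType) (f : nat -> R) a d :
  (forall k, (a <= k)%N -> (k < d)%N -> f k.+1 <= f k) ->
  forall i, (a <= i)%N -> (i <= d)%N -> f d <= f i.
Proof.
move=> h.
suff H : forall n i, (a <= i)%N -> (i + n = d)%N -> f d <= f i.
  by move=> i hi hid; apply: (H (d - i)%N) => //; lia.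
elim=> [|n IH] i hi hid; first by rewrite -hid addn0.
apply: le_trans (IH i.+1 _ _) _; [lia|lia|].
apply: h => //; lia.
Qed.

Lemma P_scale (R : realFieldType) (M : nat) (r : mechanism R M) x s f c :
  P r x s (fun n => c * f n) = c * P r x s f.
Proof. rewrite /P mulr_sumr; apply: eq_bigr => i _; ring. Qed.

Lemma P_one_le1 (R : realFieldType) (M : nat) (r : mechanism R M) x s :
  is_prob_mechanism r -> P r x s (fun _ => 1) <= 1.
Proof.
move=> hr; rewrite /P; under eq_bigr do rewrite mulr1; exact: sum_rn_le1.
Qed.

Lemma term_le_sum (R : realFieldType) (F : nat -> R) m n i :
  (forall j, (m <= j < n)%N -> 0 <= F j) -> (m <= i < n)%N ->
  F i <= \sum_(m <= j < n) F j.
Proof.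
move=> h /andP[h1 h2].
rewrite (@big_cat_nat _ _ _ i) //=; last exact: ltnW.
rewrite (@big_ltn _ _ _ i n) //.
have s1 : 0 <= \sum_(m <= j < i) F j.
  rewrite big_nat_cond; apply: sumr_ge0 => j /andP[/andP[j1 j2] _].
  by apply: h; rewrite j1 /=; apply: ltn_trans j2 h2.
have s2 : 0 <= \sum_(i.+1 <= j < n) F j.
  rewrite big_nat_cond; apply: sumr_ge0 => j /andP[/andP[j1 j2] _].
  by apply: h; rewrite j2 andbT; apply: leq_trans (ltnW j1).

lra.
Qed.

Theorem lemma3 (R : realFieldType) (M : nat) (r : mechanism R M) (alpha : R) :
  (1 <= M)%N ->
  is_prob_mechanism r ->
  DSIC r ->
  competitive_ratio r alpha ->
  forall (d : nat), (1 <= d)%N -> (d <= M)%N ->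
  forall b : vec R M, Bstar d b ->
    \sum_(1 <= i < d.+1) rn r b (sstar R M) i * vn b i
      >= alpha * \sum_(1 <= i < d.+1) vn b i / i%:R.
Proof.
move=> hM hr hD hC d hd1 hdM b [hsub hdec hbd htail1 htail2].
set ss := sstar R M.
have btail : forall n, (d < n)%N -> (n <= M)%N -> vn b n <= 0.
  move=> n; elim: n => [//|n IH] h1 h2.
  case: (ltnP d n) => hdn; last first.
    have -> : n = d by lia.
    by apply: htail1; lia.
  apply: le_trans (IH hdn (ltnW h2)); apply: htail2 => //.
have bpos : forall n, (1 <= n)%N -> (n <= d)%N -> 0 < vn b n.
  move=> n h1 h2; apply: lt_le_trans hbd _.
  exact: (@down_mono R (vn b) 1%N d hdec n h1 h2).
have LHS_ge : P r b ss (vn b) <= \sum_(1 <= i < d.+1) rn r b ss i * vn b i.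
  rewrite /P (@big_cat_nat _ _ _ d.+1) /=; [|lia|lia].
  rewrite gerDl big_nat_cond; apply: sumr_le0 => i /andP[/andP[h1 h2] _].
  apply: mulr_ge0_le0; first exact: rn_ge0.
  by apply: btail; lia.
have LHS_ge0 : 0 <= \sum_(1 <= i < d.+1) rn r b ss i * vn b i.
  rewrite big_nat_cond; apply: sumr_ge0 => i /andP[/andP[h1 h2] _]; apply: mulr_ge0; first exact: rn_ge0.
  by apply/ltW/bpos; lia.
have S_ge0 : 0 <= \sum_(1 <= i < d.+1) vn b i / i%:R.
  rewrite big_nat_cond; apply: sumr_ge0 => i /andP[/andP[h1 h2] _]; apply: divr_ge0; last exact: ler0n.
  by apply/ltW/bpos; lia.
case: (lerP alpha 0) => ha.
  apply: le_trans LHS_ge0; exact: mulr_le0_ge0.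
pose U (x : vec R M) := P r x ss (vn x).
pose E (x : vec R M) := P r x ss (fun n => n%:R).
have step : forall (x y : vec R M) (tx ty : R),
    (forall n, (1 <= n <= M)%N -> vn x n = vn b n - tx * n%:R) ->
    (forall n, (1 <= n <= M)%N -> vn y n = vn b n - ty * n%:R) ->
    U x + (tx - ty) * E x <= U y.
  move=> x y tx ty hx hy.
  have h : P r x ss (vn y) <= P r y ss (vn y) := (hD y x ss ss).1.
  have e : P r x ss (vn y) = P r x ss (fun n => vn x n + (tx - ty) * n%:R).
    apply: P_ext => n hn; rewrite hx // hy //; ring.
  rewrite /U /E -P_lin -e; exact: h.
have Elem : forall (x : vec R M) k, (1 <= k <= M)%N -> vn x k = 0 ->
    alpha * k%:R <= E x.
  move=> x k hk hxk.
  pose s := mk M (fun n => n%:R - vn x n).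
  have h1 : P r x s (vn ss) <= P r x ss (vn ss) := (hD x x ss s).2.
  have e1 : E x = P r x ss (vn ss).
    by apply: P_ext => n hn; rewrite vn_sstar.
  have e2 : gain r x s = P r x s (vn ss).
    rewrite /gain -/(P r x s (fun n => vn x n + vn s n)).
    apply: P_ext => n hn; rewrite vn_sstar // /s vn_mk //; ring.
  have hopt : k%:R <= OPT x s.
    have := @OPT_ge R M x s k (proj2 (andP hk)).
    rewrite hxk /s vn_mk // hxk subr0 add0r lexx ler0n; apply => //.
  have hk0 : 0 < k%:R :> R by rewrite ltr0n; case/andP: hk.
  have hopt0 : 0 < OPT x s by exact: lt_le_trans hk0 hopt.
  have := (proj1 hC) x s hopt0; rewrite ler_pdivlMr // => h2.
  rewrite e1; apply: le_trans h1; rewrite -e2; apply: le_trans h2.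
  by apply: ler_wpM2l => //; apply: ltW.
pose t (k : nat) := vn b k / k%:R.
have kdelta : forall k, (1 <= k)%N -> (k.+1 <= M)%N ->
    k%:R * (vn b k.+1 - vn b k) <= vn b k.
  elim=> [//|k IH] _ hk.
  case: (posnP k) => [k0|k0].
    have hk2 : (1 <= M.-1)%N by rewrite k0 in hk; lia.
    have hs : vn b 2 - vn b 1 <= vn b 1 - 0 := hsub 1%N (leqnn _) hk2.
    rewrite k0 mul1r; lra.
  have IHk := IH k0 (ltnW hk).
  have hk2 : (k.+1 <= M.-1)%N by lia.
  have hs : vn b k.+2 - vn b k.+1 <= vn b k.+1 - vn b k := hsub k.+1 (ltn0Sn _) hk2.
  have hm := ler_wpM2l (ler0n R k.+1) hs.
  rewrite -natr1 in hm *. nra.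
have mono : forall k, (1 <= k)%N -> (k < d)%N -> t k.+1 <= t k.
  move=> k hk hkd.
  have kd := kdelta k hk (leq_trans hkd hdM).
  have k0 : k%:R != 0 :> R by rewrite pnatr_eq0 -lt0n.
  have k1 : (k.+1)%:R != 0 :> R by rewrite pnatr_eq0.
  rewrite -subr_ge0.
  have -> : t k - t k.+1 = (vn b k - k%:R * (vn b k.+1 - vn b k)) / (k%:R * (k.+1)%:R).
    rewrite /t -natr1; field; rewrite natr1; apply/andP; split => //.
  apply: divr_ge0; first by rewrite subr_ge0.
  by apply: mulr_ge0; apply: ler0n.
pose c (tt : R) := mk M (fun n => vn b n - tt * n%:R).
have vc : forall tt n, (1 <= n <= M)%N -> vn (c tt) n = vn b n - tt * n%:R.
  by move=> tt n hn; rewrite /c vn_mk.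
have ck0 : forall k, (1 <= k <= M)%N -> vn (c (t k)) k = 0.
  move=> k hk; rewrite vc // /t; have k0 : k%:R != 0 :> R.
    by rewrite pnatr_eq0 -lt0n; case/andP: hk.
  by field.
have chain : forall j, (1 <= j)%N -> (j <= d)%N ->
    U (c (t 1%N)) + alpha * (\sum_(1 <= k < j) t k - (j.-1)%:R * t j) <= U (c (t j)).
  elim=> [//|j IH] _ hj.
  case: (posnP j) => [->|j0].
    by rewrite big_geq //= mul0r subrr mulr0 addr0.
  have IHj := IH j0 (ltnW hj).
  have hs := step (c (t j)) (c (t j.+1)) (t j) (t j.+1) (vc _) (vc _).
  have hjM : (1 <= j <= M)%N by rewrite j0; lia.
  have hE := Elem (c (t j)) j hjM (ck0 j hjM).
  have hm : 0 <= t j - t j.+1 by rewrite subr_ge0; apply: mono.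
  have hEm := ler_wpM2l hm hE.
  have ej : (j.-1)%:R = (j%:R - 1 : R) by rewrite -{2}(prednK j0) -natr1 addrK.
  rewrite big_nat_recr //= ; rewrite ej in IHj.
  nra.
pose K := \sum_(1 <= i < M.+1) `|vn (c (t 1%N)) i|.
have K0 : 0 <= K.
  rewrite /K big_nat_cond; apply: sumr_ge0 => i _; exact: normr_ge0.
have base : forall eta, 0 < eta -> - (K * eta) <= U (c (t 1%N)).
  move=> eta heta.
  pose L := M%:R + eta^-1.
  pose x := mk M (fun n => if n == 1%N then 0 else - L).
  have h : P r x ss (vn (c (t 1%N))) <= U (c (t 1%N)) := (hD (c (t 1%N)) x ss ss).1.
  have h1M : (1 <= 1 <= M)%N by rewrite hM.
  have hopt : 1 <= OPT x ss.
    have := @OPT_ge R M x ss 1%N hM.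
    rewrite /x vn_mk // vn_sstar //= lexx ler01 add0r; apply => //.
  have hopt0 : 0 < OPT x ss by apply: lt_le_trans hopt; exact: ltr01.
  have := (proj1 hC) x ss hopt0; rewrite ler_pdivlMr // => hg.
  have hg2 : alpha <= gain r x ss.
    apply: le_trans hg; rewrite -{1}(mulr1 alpha); apply: ler_wpM2l => //; exact: ltW.
  have Keta : 0 <= K * eta by apply: mulr_ge0 => //; exact: ltW.
  have pt : P r x ss (fun n => (K * eta) * (vn x n + vn ss n) + (- (K * eta)) * 1)
         <= P r x ss (vn (c (t 1%N))).
    apply: P_le => // i hi.
    rewrite /x vn_mk // vn_sstar //.
    case: eqP => [->|ne].
      by rewrite ck0 // add0r mulr1 mulr1 addrN.
    have hci : `|vn (c (t 1%N)) i| <= K.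
      have hr1 : (1 <= i < M.+1)%N by case/andP: hi => -> ?; rewrite /= ltnS.
      exact: (@term_le_sum R (fun j => `|vn (c (t 1%N)) j|) 1 M.+1 i
               (fun j _ => normr_ge0 _) hr1).
    move: hci; rewrite ler_norml => /andP[hci _].
    have hiM : i%:R - M%:R <= 0 :> R.
      by rewrite subr_le0 ler_nat; case/andP: hi.
    have hk := mulr_ge0_le0 Keta hiM.
    have eta0 : eta != 0 by apply/eqP => e; rewrite e ltxx in heta.
    have -> : K * eta * (- L + i%:R) = K * eta * (i%:R - M%:R) - K.
      by rewrite /L; field.
    lra.
  rewrite P_lin P_scale -/(gain r x ss) in pt.
  have p1 := P_one_le1 x ss hr.
  have q1 := ler_wpM2l Keta hg2.
  have q2 := ler_wpM2l Keta p1.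
  have a0 : 0 <= alpha by exact: ltW.
  have q3 := mulr_ge0 Keta a0.
  rewrite mulr1 in q2.
  have eg : gain r x ss = P r x ss (fun n => vn x n + vn ss n) by [].
  rewrite eg in q1; rewrite /U in h *; lra.
have hb0 : forall n, (1 <= n <= M)%N -> vn b n = vn b n - 0 * n%:R.
  by move=> n _; rewrite mul0r subr0.
have hs' := step (c (t d)) b (t d) 0 (vc _) hb0.
have hdM' : (1 <= d <= M)%N by rewrite hd1.
have hE' := Elem (c (t d)) d hdM' (ck0 d hdM').
have td0 : 0 <= t d - 0.
  rewrite subr0; apply: divr_ge0; [exact/ltW/bpos | exact: ler0n].
have hEm' := ler_wpM2l td0 hE'.
have chd := chain d hd1 (leqnn d).
have ed : (d.-1)%:R = (d%:R - 1 : R) by rewrite -{2}(prednK hd1) -natr1 addrK.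
rewrite ed in chd.
have main : alpha * \sum_(1 <= i < d.+1) vn b i / i%:R <= U b + 0 - U (c (t 1%N)).
  rewrite big_nat_recr //=.
  move: chd hs' hEm'; rewrite /t subr0 => chd hs' hEm'.
  nra.
apply: le_trans LHS_ge; apply/ler_addgt0Pr => e he.
have K1 : 0 < K + 1 by lra.
have := base (e / (K + 1)) (divr_gt0 he K1).
have hKe : K * (e / (K + 1)) <= e.
  rewrite mulrA ler_pdivrMr //; nra.
rewrite /U in main *; lra.
Qed.
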